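(* Let $Y$ be a Hausdorff space and $g:Y\to X/\!/G$ continuous. Then: (1) $\iota_g:W_g\to Y\times\mathbb C$ is a topological embedding, and under the homeomorphism $W_g\cong E_g:=\iota_g(W_g)$, the covering $\pi_W:W_g\to Y$ corresponds to the restriction of the first projection $p_1|_{E_g}:E_g\to Y$; in particular $p_1|_{E_g}$ is a covering space equivalent to $\pi_W$. (2) With $F:=\overline P\circ g:Y\to C^{lf}_\infty(\mathbb C)$, one has $E_g=\{(y,z)\in Y\times\mathbb C: z\in F(y)\}$, and $E_g$ is closed in $Y\times\mathbb C$.
   Context: $X=\mathrm{Conf}^{lf}_\infty(\mathbb C)$ is the space of sequences $(x_j)_{j\ge1}$ of pairwise distinct complex numbers with $\{j:|x_j|\le R\}$ finite for all $R$, metrized by $d_{\Sigma}(x,y)=\sum_j2^{-j}\min\{|x_j-y_j|,1\}+d_{\mathcal V}(P(x),P(y))$, where $P(x)=\{x_j\}\in C^{lf}_\infty(\mathbb C)$ (countably infinite locally finite subsets of $\mathbb C$, with the vague topology/vague metric $d_{\mathcal V}$). $G=\mathrm{Aut}(\mathbb N)$ discrete, acting by $\sigma\cdot(x_j)=(x_{\sigma(j)})$; $EG$ a contractible free right $G$-CW complex; $X/\!/G=(EG\times X)/G$ with $(e,x)\cdot\sigma=(e\sigma^{-1},\sigma\cdot x)$; the quotient $EG\times X\to X/\!/G$ is a principal $G$-bundle. $\overline P:X/\!/G\to C^{lf}_\infty(\mathbb C)$, $\overline P([e,x])=P(x)$. $P_g=g^*(EG\times X)\to Y$ is the pullback principal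 $G$-bundle (points $(y,e,x)$), $W_g=P_g\times_G\mathbb N$ (with $((y,e,x)\cdot\sigma,n)\sim((y,e,x),\sigma\cdot n)$), $\pi_W:W_g\to Y$ the projection, $\mathrm{ev}_g([(y,e,x),n])=x_n$, and $\iota_g(w)=(\pi_W(w),\mathrm{ev}_g(w))$. *)

(* Defs.v *)
From HB Require Import structures.
From mathcomp Require Import all_boot all_order all_algebra.
From mathcomp Require Import all_classical all_reals topology normedtype.
Import numFieldNormedType.Exports.
Import GRing.Theory Num.Theory.
Local Open Scope classical_set_scope.
Local Open Scope ring_scope.

(* The complex plane C is modelled as R x R (R : realType) with its    *)
(* product (= Euclidean) topology.                                     *)
Notation CC R := (R * R)%type.

Definition cmod {R : realType} (z : CC R) : R := Num.sqrt (z.1 ^+ 2 + z.2 ^+ 2).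

Definition gen_open {T : Type} (B : set (set T)) (U : set T) : Prop :=
  forall t, U t -> exists (n : nat) (b : nat -> set T),
    (forall i, (i < n)%N -> B (b i)) /\ (forall i, (i < n)%N -> b i t) /\
    (forall s, (forall i, (i < n)%N -> b i s) -> U s).

Definition cts {A B : Type} (opA : set (set A)) (opB : set (set B)) (f : A -> B) :=
  forall V, opB V -> opA (f @^-1` V).

(* The group G = Aut(N) of bijections of N (discrete).                 *)
Record autN := AutN {
  aut_fun : nat -> nat ;
  aut_inv : nat -> nat ;
  aut_funK : cancel aut_fun aut_inv ;
  aut_invK : cancel aut_inv aut_fun }.

Definition aut_id : autN := @AutN id id (fun _ => erefl) (fun _ => erefl).

Definition aut_comp (s t : autN) : autN :=
  @AutN (aut_fun s \o aut_fun t) (aut_inv t \o aut_inv s)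
    (fun n => etrans (f_equal (aut_inv t) (aut_funK s (aut_fun t n))) (aut_funK t n))
    (fun n => etrans (f_equal (aut_fun s) (aut_invK t (aut_inv s n))) (aut_invK s n)).

(* EG : a free right G-space on which G = Aut(N) acts by a covering-space *)
(* (properly discontinuous) action, and which is contractible.           *)
Definition right_action (EG : topologicalType) (act : EG -> autN -> EG) : Prop :=
  (forall e, act e aut_id = e) /\
  (forall e s t, act (act e s) t = act e (aut_comp s t)) /\
  (forall s, continuous (act^~ s)).

Definition covering_action (EG : topologicalType) (act : EG -> autN -> EG) : Prop :=
  forall e, exists U : set EG, open U /\ U e /\
    forall (s : autN) u, U u -> U (act u s) -> aut_fun s =1 id.

Definition contractible (R : realType) (T : topologicalType) : Prop :=
  exists (t0 : T) (H : (T * R)%type -> T),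
    ({within [set p : (T * R)%type | 0 <= p.2 <= 1], continuous H}) /\
    (forall t, H (t, 0) = t) /\ (forall t, H (t, 1) = t0).

Section Construction.
Context (R : realType).
Local Notation C := (CC R).

Definition locfin (S : set C) : Prop :=
  forall r : R, finite_set (S `&` [set z | cmod z <= r]).

Definition Clf : set (set C) :=
  [set S | countable S /\ infinite_set S /\ locfin S].

Definition testfun (f : C -> R) : Prop :=
  continuous f /\ compact (closure [set z | f z != 0]).

(* pairing of a locally finite set (as a counting measure) with f *)
Definition vpair (f : C -> R) (S : set C) : R := \sum_(z \in S) f z.

(* subbase of the vague topology: S |-> sum_{z in S} f z is continuous  *)
Definition vague_subbase : set (set (set C)) :=
  [set V | exists (f : C -> R) (U : set R),
     testfun f /\ open U /\ V = [set S | U (vpair f S)]].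

(* X = Conf^lf_oo(C): injective sequences with locally finite range.   *)
Definition Xset : set (nat -> C) :=
  [set x | injective x /\ forall r : R, finite_set [set j | cmod (x j) <= r]].

Definition Xsp := {x : nat -> C | Xset x}.

Definition Pmap (x : Xsp) : set C := range (sval x).

(* topology of d_Sigma : join of the product topology of the coordinates *)
(* (first summand) and the pull-back of the vague topology by P          *)
(* (second summand).                                                     *)
Definition X_subbase : set (set Xsp) :=
  [set V | (exists (j : nat) (U : set C), open U /\ V = [set x | U (sval x j)]) \/
           (exists W, vague_subbase W /\ V = [set x | W (Pmap x)])].

Definition openX : set (set Xsp) := gen_open X_subbase.

Definition actX (s : autN) (x : Xsp) (x' : Xsp) : Prop :=
  sval x' = sval x \o aut_fun s.

Context (EG : topologicalType) (act : EG -> autN -> EG).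

Definition EX := (EG * Xsp)%type.

Definition openEX : set (set EX) :=
  gen_open [set V | (exists U, open U /\ V = [set p : EX | U p.1]) \/
                    (exists U, openX U /\ V = [set p : EX | U p.2])].

Definition relEX (p q : EX) : Prop :=
  exists s : autN, p.1 = act q.1 s /\ actX s q.2 p.2.

(* X//G = (EG x X)/G : the set of orbits, with the quotient topology *)
Definition XG := {A : set EX | exists p, A = [set q | relEX q p]}.

Definition qXG (p : EX) : XG :=
  exist _ [set q | relEX q p] (ex_intro _ p erefl).

Definition openXG : set (set XG) := [set W | openEX (qXG @^-1` W)].

Definition reprXG (a : XG) : EX := sval (cid (svalP a)).

Definition Pbar (a : XG) : set C := Pmap (reprXG a).2.

Context (Y : topologicalType) (g : Y -> XG).

(* P_g = g^*(EG x X) = {(y, (e, x)) | g y = [e, x]} with the subspace   *)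
(* topology of the product Y x (EG x X).                                *)
Definition Pg := {p : (Y * EX)%type | g p.1 = qXG p.2}.

Definition openPg : set (set Pg) :=
  gen_open [set V | (exists U, open U /\ V = [set p : Pg | U (sval p).1]) \/
                    (exists U, openEX U /\ V = [set p : Pg | U (sval p).2])].

Definition PgN := (Pg * nat)%type.

Definition openPgN : set (set PgN) :=
  gen_open [set V | (exists U, openPg U /\ V = [set p : PgN | U p.1]) \/
                    (exists m : nat, V = [set p : PgN | p.2 = m])].

Definition relW (a b : PgN) : Prop :=
  exists s : autN,
    (sval a.1).1 = (sval b.1).1 /\
    (sval a.1).2.1 = act (sval b.1).2.1 s /\
    actX s (sval b.1).2.2 (sval a.1).2.2 /\
    b.2 = aut_fun s a.2.

(* W_g = P_g x_G N with the quotient topology *)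
Definition Wg := {A : set PgN | exists a, A = [set b | relW b a]}.

Definition qW (a : PgN) : Wg := exist _ [set b | relW b a] (ex_intro _ a erefl).

Definition openW : set (set Wg) := [set V | openPgN (qW @^-1` V)].

Definition reprW (w : Wg) : PgN := sval (cid (svalP w)).

Definition piW (w : Wg) : Y := (sval (reprW w).1).1.

Definition evg (w : Wg) : C := sval (sval (reprW w).1).2.2 (reprW w).2.

Definition iotag (w : Wg) : (Y * C)%type := (piW w, evg w).

Definition Eg : set (Y * C)%type := range iotag.

Definition Fg (y : Y) : set C := Pbar (g y).

End Construction.

Definition embedding {W : Type} {T : topologicalType} (opW : set (set W)) (f : W -> T) :=
  injective f /\ cts opW open f /\
    forall U, opW U -> exists V : set T, open V /\ f @` U = V `&` range f.

Definition covering_on {T B : topologicalType} (E : set T) (p : T -> B) : Prop :=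
  ({within E, continuous p}) /\
    forall b : B, exists U : set B, open U /\ U b /\
    exists (I : Type) (V : I -> set T),
      (forall i, exists O, open O /\ V i = O `&` E) /\
    (forall i j, i <> j -> V i `&` V j = set0) /\
    E `&` (p @^-1` U) = \bigcup_i V i /\
    (forall i, {in V i &, injective p} /\ p @` V i = U /\
    forall O, open O -> open (p @` (O `&` V i))).

(* Main.v *)
Require Import Defs.
From mathcomp Require Import all_boot all_order all_algebra.
From mathcomp Require Import all_classical all_reals topology normedtype.
From mathcomp Require Import lra.
Import numFieldNormedType.Exports.
Import GRing.Theory Num.Theory Order.TTheory.
Local Open Scope classical_set_scope.
Section GenOpen.
Context {T : Type} (B : set (set T)).

Lemma gen_open_sub b : B b -> gen_open B b.
Proof.
move=> Bb t bt; exists 1%N, (fun _ => b); split; first by move=> i _.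
split; first by move=> i _.
by move=> s /(_ 0%N erefl).
Qed.

Lemma gen_openT : gen_open B setT.
Proof. by move=> t _; exists 0%N, (fun _ => setT); split. Qed.

Lemma gen_open_local U :
  (forall t, U t -> exists W, gen_open B W /\ W t /\ W `<=` U) -> gen_open B U.
Proof.
move=> H t Ut; have [W [oW [Wt WU]]] := H t Ut.
have [n [b [Bb [bt bW]]]] := oW t Wt.
by exists n, b; split => //; split => // s /bW /WU.
Qed.

Lemma gen_openI U V : gen_open B U -> gen_open B V -> gen_open B (U `&` V).
Proof.
move=> oU oV t [Ut Vt].
have [n [b [Bb [bt bU]]]] := oU t Ut.
have [m [c [Bc [ct cV]]]] := oV t Vt.
exists (n + m)%N, (fun i => if (i < n)%N then b i else c (i - n)%N).
split; [|split].
- move=> i lt /=; case: ifP => h; first exact: Bb.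
  apply: Bc; move: h lt; case: (ltnP i n) => // ni _; by rewrite ltn_subLR.
- move=> i lt /=; case: ifP => h; first exact: bt.
  apply: ct; move: h lt; case: (ltnP i n) => // ni _; by rewrite ltn_subLR.
- move=> s Hs; split.
  + by apply: bU => i lt; have := Hs i (ltn_addr _ lt); rewrite lt.
  + apply: cV => i lt; have := Hs (i + n)%N; rewrite [(n + m)%N]addnC ltn_add2r lt addnK.
    by rewrite ltnNge leq_addl /=; apply.
Qed.

Lemma gen_open_bigcup (I : Type) (F : I -> set T) :
  (forall i, gen_open B (F i)) -> gen_open B (\bigcup_i F i).
Proof.
move=> H t [i _ Fit]; have [n [b [Bb [bt bF]]]] := H i t Fit.
by exists n, b; split => //; split => // s /bF Fs; exists i.
Qed.

Lemma gen_open_eq U V : U = V -> gen_open B U -> gen_open B V.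
Proof. by move=> ->. Qed.

End GenOpen.

Lemma gen_open_finI {T} (B : set (set T)) (n : nat) (W : nat -> set T) :
  (forall i, (i < n)%N -> gen_open B (W i)) ->
  gen_open B [set s | forall i, (i < n)%N -> W i s].
Proof.
elim: n => [|n IH] H.
  have -> : [set s | forall i, (i < 0)%N -> W i s] = setT by apply/seteqP; split.
  exact: gen_openT.
have -> : [set s | forall i, (i < n.+1)%N -> W i s] =
   [set s | forall i, (i < n)%N -> W i s] `&` W n.
  apply/seteqP; split => s.
    by move=> Hs; split; [move=> i lt; apply: Hs; apply: ltnW|apply: Hs].
  move=> [Hs Wn] i; rewrite ltnS leq_eqVlt => /orP[/eqP->//|]; exact: Hs.
apply: gen_openI; first by apply: IH => i lt; apply: H; apply: ltnW.
exact: H.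
Qed.

Lemma gen_open_pre {A A' : Type} (B : set (set A)) (B' : set (set A'))
  (f : A -> A') : (forall b, B' b -> gen_open B (f @^-1` b)) ->
  forall U, gen_open B' U -> gen_open B (f @^-1` U).
Proof.
move=> Hb U oU; apply: gen_open_local => t Ut.
have [n [b [Bb [bt bU]]]] := oU (f t) Ut.
exists [set s | forall i, (i < n)%N -> (f @^-1` b i) s]; split.
  by apply: gen_open_finI => i lt; apply: Hb; apply: Bb.
by split => // s Hs; apply: bU.
Qed.

Lemma open_pre_gen {A : topologicalType} {A' : Type} (B' : set (set A'))
  (U0 : set A) (f : A -> A') : open U0 ->
  (forall b, B' b -> open (U0 `&` f @^-1` b)) ->
  forall U, gen_open B' U -> open (U0 `&` f @^-1` U).
Proof.
move=> oU0 Hb U oU; rewrite openE => t [U0t Ut].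
have [n [b [Bb [bt bU]]]] := oU (f t) Ut.
have : forall k, (k <= n)%N ->
    nbhs t (U0 `&` [set s | forall i, (i < k)%N -> b i (f s)]).
  elim => [|k IH] kn.
    apply: open_nbhs_nbhs; split; last by split.
    by rewrite (_ : _ `&` _ = U0) //; apply/seteqP; split => [s []//|s ?]; split.
  have h1 := IH (ltnW kn).
  have h2 : nbhs t (U0 `&` f @^-1` b k).
    by apply: open_nbhs_nbhs; split; [exact: (Hb _ (Bb k kn))|split => //; exact: bt].
  have : nbhs t ((U0 `&` f @^-1` b k) `&` (U0 `&`
        [set s | forall i, (i < k)%N -> b i (f s)])) by apply: filterI.
  apply: filterS => s [[U0s bns] [_ Hs]]; split => // i.
  by rewrite ltnS leq_eqVlt => /orP[/eqP->//|]; exact: Hs.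
move/(_ n (leqnn n)).
by apply: filterS => s [U0s Hs]; split => //; apply: bU.
Qed.

Lemma aut_eq (s t : autN) : aut_fun s =1 aut_fun t -> s = t.
Proof.
case: s t => f fi fK fiK [h hi hK hiK] /= e.
have ef : f = h := funext e; subst h.
have ei : fi = hi.
  by apply: funext => n; rewrite -[in RHS](fiK n) hK.
subst hi; congr AutN; exact: Prop_irrelevance.
Qed.

Definition ainv (s : autN) : autN := @AutN (aut_inv s) (aut_fun s) (aut_invK s) (aut_funK s).

Lemma comp_ainv s : aut_comp s (ainv s) = aut_id.
Proof. by apply: aut_eq => n /=; rewrite aut_invK. Qed.

Lemma comp_ainv' s : aut_comp (ainv s) s = aut_id.
Proof. by apply: aut_eq => n /=; rewrite aut_funK. Qed.

Lemma aut_fun_inj (s : autN) : injective (aut_fun s).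
Proof. exact: can_inj (aut_funK s). Qed.

Section Xact.
Context (R : realType).
Local Notation C := (CC R).
Local Notation Xsp := (Xsp R).

Lemma xact_proof (s : autN) (x : Xsp) : Xset R (sval x \o aut_fun s).
Proof.
case: x => x [xi xf] /=; split.
  by move=> i j /= /xi /aut_fun_inj.
move=> r; have -> : [set j | cmod ((x \o aut_fun s) j) <= r]%R =
    aut_inv s @` [set k | cmod (x k) <= r]%R.
  apply/seteqP; split => j /=.
    by move=> h; exists (aut_fun s j) => //; rewrite aut_funK.
  by move=> [k kr <-]; rewrite aut_invK.
exact/finite_image/xf.
Qed.

Definition xact (s : autN) (x : Xsp) : Xsp := exist _ _ (xact_proof s x).

Lemma xact_val s x : sval (xact s x) = sval x \o aut_fun s.
Proof. by []. Qed.

Lemma Xsp_eq (x y : Xsp) : sval x = sval y -> x = y.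
Proof. by case: x y => x hx [y hy] /= e; apply: eq_exist. Qed.

Lemma Pmap_xact s x : Pmap R (xact s x) = Pmap R x.
Proof.
apply/seteqP; split => z /=.
  by move=> [j _ <-]; exists (aut_fun s j).
by move=> [j _ <-]; exists (aut_inv s j) => //=; rewrite aut_invK.
Qed.

End Xact.

Section Orbits.
Context {R : realType} {EG : topologicalType} {act : EG -> autN -> EG}
  (Hact : right_action EG act).
Local Notation C := (CC R).
Local Notation Xsp := (Xsp R).
Local Notation EX := (EX R EG).
Local Notation relEX := (relEX R EG act).
Local Notation qXG := (qXG R EG act).
Local Notation XG := (XG R EG act).
Local Notation xact := (xact R).

Lemma act_id e : act e aut_id = e.
Proof. by case: Hact. Qed.

Lemma act_comp e s t : act (act e s) t = act e (aut_comp s t).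
Proof. by case: Hact => _ []. Qed.

Lemma act_inv e s : act (act e s) (ainv s) = e.
Proof. by rewrite act_comp comp_ainv act_id. Qed.

Lemma relEX_refl p : relEX p p.
Proof. by exists aut_id; split; rewrite ?act_id. Qed.

Lemma relEX_sym {p q} : relEX p q -> relEX q p.
Proof.
move=> [s [e1 e2]]; exists (ainv s); split; first by rewrite e1 act_inv.
rewrite /actX e2; apply: funext => n /=; by rewrite aut_invK.
Qed.

Lemma relEX_trans {p q r} : relEX p q -> relEX q r -> relEX p r.
Proof.
move=> [s [e1 e2]] [t [f1 f2]]; exists (aut_comp t s); split.
  by rewrite e1 f1 act_comp.
by rewrite /actX e2 f2.
Qed.

Lemma relEXE p s : relEX (act p.1 s, xact s p.2) p.
Proof. by exists s. Qed.

Lemma relEXP p q : relEX p q -> exists s, p = (act q.1 s, xact s q.2).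
Proof.
move=> [s [e1 e2]]; exists s; case: p e1 e2 => e x /= -> e2; congr pair.
exact: Xsp_eq.
Qed.

Lemma qXG_eq p q : qXG p = qXG q <-> relEX p q.
Proof.
split.
  move/(congr1 sval) => /= e.
  have : [set z | relEX z p] p by exact: relEX_refl.
  by rewrite e.
move=> h; apply: eq_exist; apply/seteqP; split => z hz.
  exact: relEX_trans hz h.
exact: relEX_trans hz (relEX_sym h).
Qed.

Lemma reprXGK a : qXG (reprXG R EG act a) = a.
Proof.
rewrite /reprXG; case: cid => p e; case: a e => A h /= e.
by apply: eq_exist; rewrite e.
Qed.

Lemma Pbar_qXG p : Pbar R EG act (qXG p) = Pmap R p.2.
Proof.
rewrite /Pbar; have := reprXGK (qXG p); move/qXG_eq.
by move/relEXP => [s ->] /=; rewrite Pmap_xact.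
Qed.

End Orbits.

Section WClasses.
Context {R : realType} {EG : topologicalType} {act : EG -> autN -> EG}
  (Hact : right_action EG act) {Y : topologicalType} {g : Y -> XG R EG act}.
Local Notation C := (CC R).
Local Notation Xsp := (Xsp R).
Local Notation EX := (EX R EG).
Local Notation relEX := (relEX R EG act).
Local Notation qXG := (qXG R EG act).
Local Notation XG := (XG R EG act).
Local Notation xact := (xact R).
Local Notation Pg := (Pg R EG act Y g).
Local Notation PgN := (PgN R EG act Y g).
Local Notation relW := (relW R EG act Y g).
Local Notation qW := (qW R EG act Y g).
Local Notation reprW := (reprW R EG act Y g).
Local Notation iotag := (iotag R EG act Y g).
Local Notation Wg := (Wg R EG act Y g).

Lemma relW_refl a : relW a a.
Proof. by exists aut_id; rewrite (act_id Hact). Qed.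

Lemma relW_sym {a b} : relW a b -> relW b a.
Proof.
move=> [s [e1 [e2 [e3 e4]]]]; exists (ainv s); split => //; split.
  by rewrite e2 (act_inv Hact).
split; first by rewrite /actX e3; apply: funext => n /=; rewrite aut_invK.
by rewrite e4 /= aut_funK.
Qed.

Lemma relW_trans {a b c} : relW a b -> relW b c -> relW a c.
Proof.
move=> [s [e1 [e2 [e3 e4]]]] [t [f1 [f2 [f3 f4]]]]; exists (aut_comp t s).
split; first by rewrite e1.
split; first by rewrite e2 f2 (act_comp Hact).
split; first by rewrite /actX e3 f3.
by rewrite f4 e4.
Qed.

Lemma qW_eq a b : qW a = qW b <-> relW a b.
Proof.
split.
  move/(congr1 sval) => /= e.
  have : [set z | relW z a] a by exact: relW_refl.
  by rewrite e.
move=> h; apply: eq_exist; apply/seteqP; split => z hz.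
  exact: relW_trans hz h.
exact: relW_trans hz (relW_sym h).
Qed.

Lemma reprWK w : qW (reprW w) = w.
Proof.
rewrite /reprW; case: cid => p e; case: w e => A h /= e.
by apply: eq_exist; rewrite e.
Qed.

Lemma qW_surj w : exists a, w = qW a.
Proof. by exists (reprW w); rewrite reprWK. Qed.

Lemma iotag_qW a : iotag (qW a) = ((sval a.1).1, sval (sval a.1).2.2 a.2).
Proof.
rewrite /iotag /piW /evg.
have : relW (reprW (qW a)) a by apply/qW_eq; rewrite reprWK.
move: (reprW (qW a)) => b [s [e1 [e2 [e3 e4]]]].
by rewrite e1 e3 e4.
Qed.

Lemma Pg_prop (p : Pg) : g (sval p).1 = qXG (sval p).2.
Proof. exact: svalP p. Qed.

Lemma iotag_inj : injective iotag.
Proof.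
move=> w1 w2; have [a ->] := qW_surj w1; have [b ->] := qW_surj w2.
rewrite !iotag_qW => -[ey ex]; apply/qW_eq.
have : qXG (sval a.1).2 = qXG (sval b.1).2 by rewrite -!Pg_prop ey.
move/(qXG_eq Hact) => [s [e1 e2]]; exists s; split => //; split => //; split => //.
move: ex; rewrite e2 /=.
by case: (svalP (sval b.1).2.2) => inj _ /inj.
Qed.

Lemma Eg_char : Eg R EG act Y g = [set yz | Fg R EG act Y g yz.1 yz.2].
Proof.
apply/seteqP; split => -[y z].
  move=> [w _]; have [a ->] := qW_surj w; rewrite iotag_qW => -[<- <-].
  rewrite /= /Fg Pg_prop (Pbar_qXG Hact) /=; by exists a.2.
rewrite /Fg /= /Pbar => -[m _ <-].
pose r := reprXG R EG act (g y).
have hp : g (y, r).1 = qXG (y, r).2 by rewrite /= (reprXGK).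
exists (qW (exist _ (y, r) hp, m)) => //; by rewrite iotag_qW.
Qed.

End WClasses.

Section Topo.
Context {R : realType} {EG : topologicalType} {act : EG -> autN -> EG}
  (Hact : right_action EG act) {Y : topologicalType} {g : Y -> XG R EG act}.
Local Notation C := (CC R).
Local Notation Xsp := (Xsp R).
Local Notation EX := (EX R EG).
Local Notation relEX := (relEX R EG act).
Local Notation qXG := (qXG R EG act).
Local Notation XG := (XG R EG act).
Local Notation xact := (xact R).
Local Notation Pg := (Pg R EG act Y g).
Local Notation PgN := (PgN R EG act Y g).
Local Notation openX := (openX R).
Local Notation openEX := (openEX R EG).
Local Notation openXG := (openXG R EG act).
Local Notation openPg := (openPg R EG act Y g).
Local Notation openPgN := (openPgN R EG act Y g).

Lemma openX_coord j (U : set C) : open U -> openX [set x | U (sval x j)].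
Proof. by move=> oU; apply: gen_open_sub; left; exists j, U. Qed.

Lemma openX_vague W : vague_subbase R W -> openX [set x | W (Pmap R x)].
Proof. by move=> vW; apply: gen_open_sub; right; exists W. Qed.

Lemma openX_xact s U : openX U -> openX (xact s @^-1` U).
Proof.
apply: gen_open_pre => b [[j [U' [oU' ->]]]|[W [vW ->]]].
  rewrite (_ : xact s @^-1` _ = [set x | U' (sval x (aut_fun s j))]);
    [exact: openX_coord|by apply: funext].
by rewrite /preimage /= (_ : (fun x => W (Pmap R (xact s x))) = (fun x => W (Pmap R x)));
  [exact: openX_vague|apply: funext => x; rewrite Pmap_xact].
Qed.

Lemma openEX_fst (U : set EG) : open U -> openEX [set p | U p.1].
Proof. by move=> oU; apply: gen_open_sub; left; exists U. Qed.

Lemma openEX_snd (V : set Xsp) : openX V -> openEX [set p | V p.2].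
Proof. by move=> oV; apply: gen_open_sub; right; exists V. Qed.

Definition hact (s : autN) (p : EX) : EX := (act p.1 s, xact s p.2).

Lemma openEX_hact s O : openEX O -> openEX (hact s @^-1` O).
Proof.
apply: gen_open_pre => b [[U [oU ->]]|[V [oV ->]]].
  rewrite (_ : hact s @^-1` _ = [set p | ((act^~ s) @^-1` U) p.1]);
    last by apply: funext.
  apply: openEX_fst; apply: open_comp => // x _; case: Hact => _ [_ /(_ s)]; exact.
rewrite (_ : hact s @^-1` _ = [set p | (xact s @^-1` V) p.2]); last by apply: funext.
apply: openEX_snd; exact: openX_xact.
Qed.

Lemma qXG_pre_im (O : set EX) :
  qXG @^-1` (qXG @` O) = \bigcup_s (hact s @^-1` O).
Proof.
apply/seteqP; split => p /=.
  move=> [o Oo /(qXG_eq Hact)] /(relEXP) [s e].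
  by exists s => //; rewrite /preimage /hact /= -e.
move=> [s _ Os]; exists (hact s p) => //; apply/(qXG_eq Hact); exact: relEXE.
Qed.

Lemma openXG_im O : openEX O -> openXG (qXG @` O).
Proof.
move=> oO; rewrite /openXG /= qXG_pre_im; apply: gen_open_bigcup => s.
exact: openEX_hact.
Qed.

Lemma openXG_Pbar V : vague_subbase R V -> openXG [set a | V (Pbar R EG act a)].
Proof.
move=> vV; rewrite /openXG /=.
rewrite (_ : qXG @^-1` _ = [set p | [set x | V (Pmap R x)] p.2]).
  by apply: openEX_snd; exact: openX_vague.
by apply: funext => p; rewrite /preimage /= (Pbar_qXG Hact).
Qed.

Lemma openPg_fst (U : set Y) : open U -> openPg [set p | U (sval p).1].
Proof. by move=> oU; apply: gen_open_sub; left; exists U. Qed.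

Lemma openPg_snd (O : set EX) : openEX O -> openPg [set p | O (sval p).2].
Proof. by move=> oO; apply: gen_open_sub; right; exists O. Qed.

Lemma openPgN_fst (O : set Pg) : openPg O -> openPgN [set a | O a.1].
Proof. by move=> oO; apply: gen_open_sub; left; exists O. Qed.

Lemma openPgN_snd m : openPgN [set a | a.2 = m].
Proof. by apply: gen_open_sub; right; exists m. Qed.

End Topo.

Section Chart.
Context {R : realType} {EG : topologicalType} {act : EG -> autN -> EG}
  (Hact : right_action EG act) (Hcov : covering_action EG act)
  {Y : topologicalType} {g : Y -> XG R EG act}
  (Hg : cts open (openXG R EG act) g).
Local Notation C := (CC R).
Local Notation Xsp := (Xsp R).
Local Notation EX := (EX R EG).
Local Notation relEX := (relEX R EG act).
Local Notation qXG := (qXG R EG act).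
Local Notation XG := (XG R EG act).
Local Notation xact := (xact R).
Local Notation openEX := (openEX R EG).

Lemma chart (y0 : Y) : exists (U' : set Y) (sg : Y -> EX),
  open U' /\ U' y0 /\ (forall y, U' y -> g y = qXG (sg y)) /\
  (forall O, openEX O -> open (U' `&` sg @^-1` O)).
Proof.
pose r0 := reprXG R EG act (g y0).
have [U [oU [Ue0 HU]]] := Hcov r0.1.
pose O0 := [set p : EX | U p.1].
have oO0 : openEX O0 by apply: openEX_fst.
have uniq : forall o o', O0 o -> O0 o' -> qXG o = qXG o' -> o = o'.
  move=> o o' Oo Oo' /(qXG_eq Hact) /relEXP [s e].
  have sid := HU s o'.1 Oo' ltac:(by move: Oo; rewrite e).
  rewrite e; have -> : s = aut_id by apply: aut_eq.
  rewrite (act_id Hact); case: o' {Oo' e} => e' x' /=; congr pair.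
  exact: Xsp_eq.
have imE : forall O : set EX, qXG @` O = [set a | exists o, O o /\ qXG o = a].
  move=> O; apply/seteqP; split => a /=.
    by case=> o Oo ea; exists o.
  by case=> o [Oo ea]; exists o.
pose U' := g @^-1` [set a | exists o, O0 o /\ qXG o = a].
pose sg y := match pselect (U' y) with left h => sval (cid h) | right _ => r0 end.
have sgP : forall y, U' y -> O0 (sg y) /\ qXG (sg y) = g y.
  by move=> y hy; rewrite /sg; case: pselect => // h; case: cid.
exists U', sg; split.
  by rewrite /U' -imE; apply: Hg; apply: openXG_im.
split.
  exists r0; split; first exact: Ue0.
  exact: (reprXGK).
split; first by move=> y /sgP [_ ->].
move=> O oO.
have -> : U' `&` sg @^-1` O = g @^-1` (qXG @` (O `&` O0)).
  apply/seteqP; split => y.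
    move=> [hy Oy]; have [O0y ey] := sgP y hy; by exists (sg y).
  move=> [o [Oo O0o] eo]; have hy : U' y by exists o.
  have [O0y ey] := sgP y hy.
  split => //; have e : sg y = o by apply: uniq => //; rewrite ey eo.
  by rewrite /preimage /= e.
apply: Hg; apply: openXG_im => //; exact: gen_openI.
Qed.

End Chart.

Section Analytic.
Context {R : realType}.
Local Open Scope ring_scope.
Local Notation C := (CC R).

Definition dC (z w : C) : R := Num.max `|z.1 - w.1| `|z.2 - w.2|.

Lemma dC_ge0 z w : 0 <= dC z w.
Proof. by rewrite /dC le_max normr_ge0. Qed.

Lemma dC_refl z : dC z z = 0.
Proof. by rewrite /dC !subrr normr0 maxxx. Qed.

Lemma dC_sym z w : dC z w = dC w z.
Proof. by rewrite /dC distrC [`|z.2 - _|]distrC. Qed.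

Lemma dC_tri z u w : dC z w <= dC z u + dC u w.
Proof.
rewrite /dC ge_max; apply/andP; split.
  apply: (le_trans (ler_distD u.1 _ _)); apply: lerD; rewrite le_max lexx //.
apply: (le_trans (ler_distD u.2 _ _)); apply: lerD; rewrite le_max lexx ?orbT //.
Qed.

Lemma dC_eq0 z w : dC z w = 0 -> z = w.
Proof.
move=> h; have /andP[h1 h2] : (`|z.1 - w.1| <= 0) && (`|z.2 - w.2| <= 0).
  by rewrite -ge_max -/(dC z w) h.
move: h1 h2; rewrite !normr_le0 !subr_eq0 => /eqP e1 /eqP e2.
by clear h; case: z w e1 e2 => a b [c d] /= -> ->.
Qed.

Lemma dC_gt0 z w : z <> w -> 0 < dC z w.
Proof.
move=> ne; rewrite lt_neqAle dC_ge0 andbT; apply/eqP => h.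
by apply: ne; apply: dC_eq0.
Qed.

Lemma cmod_le (z : C) : cmod z <= `|z.1| + `|z.2|.
Proof.
have h : z.1 ^+ 2 + z.2 ^+ 2 <= (`|z.1| + `|z.2|) ^+ 2.
  rewrite sqrrD (real_normK (num_real z.1)) (real_normK (num_real z.2)).
  rewrite -addrA lerD2l lerDr.
  by rewrite mulrn_wge0 // mulr_ge0.
rewrite /cmod; apply: (le_trans (ler_wsqrtr h)).
rewrite sqrtr_sqr ger0_norm //.
by rewrite addr_ge0.
Qed.

Lemma cmod_dC (z z0 : C) (r : R) : dC z z0 <= r ->
  cmod z <= `|z0.1| + `|z0.2| + 2 * r.
Proof.
move=> h; apply: (le_trans (cmod_le z)).
have h1 : `|z.1| <= `|z0.1| + r.
  apply: (le_trans (_ : _ <= `|z0.1| + `|z.1 - z0.1|)).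
    by rewrite -lerBlDl lerB_dist.
  by rewrite lerD2l (le_trans _ h) // le_max lexx.
have h2 : `|z.2| <= `|z0.2| + r.
  apply: (le_trans (_ : _ <= `|z0.2| + `|z.2 - z0.2|)).
    by rewrite -lerBlDl lerB_dist.
  by rewrite lerD2l (le_trans _ h) // le_max lexx orbT.
by apply: (le_trans (lerD h1 h2)); rewrite mulr2n mulrDl mul1r !addrA lerD2r addrAC.
Qed.

Lemma dC_cont (z0 : C) : continuous (fun z : C => dC z z0).
Proof.
move=> z; apply: (@continuous_max R C (fun z => `|z.1 - z0.1|) (fun z => `|z.2 - z0.2|)).
  by apply: cvg_norm; apply: cvgB; [exact: cvg_fst|exact: cvg_cst].
by apply: cvg_norm; apply: cvgB; [exact: cvg_snd|exact: cvg_cst].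
Qed.

End Analytic.

Section Bump.
Context {R : realType}.
Local Open Scope ring_scope.
Local Notation C := (CC R).

Definition bump (rho : R) (z0 z : C) : R :=
  Num.min 1 (Num.max 0 (2 - dC z z0 / rho)).

Lemma bump_ge0 rho z0 z : 0 <= bump rho z0 z.
Proof. by rewrite /bump le_min ler01 le_max lexx. Qed.

Lemma bump_le1 rho z0 z : bump rho z0 z <= 1.
Proof. by rewrite /bump ge_min lexx. Qed.

Lemma bump1 rho z0 z : 0 < rho -> dC z z0 <= rho -> bump rho z0 z = 1.
Proof.
move=> rp h; rewrite /bump; apply/min_idPl.
rewrite le_max; apply/orP; right.
rewrite lerBrDl -lerBrDr (_ : 2 - 1 = 1 :> R); last by rewrite -[2%R]/(1 + 1)%R addrK.
by rewrite ler_pdivrMr // mul1r.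
Qed.

Lemma bump_supp rho z0 z : 0 < rho -> bump rho z0 z != 0 -> dC z z0 < 2 * rho.
Proof.
move=> rp; apply: contraNT; rewrite -leNgt => h.
rewrite /bump; have -> : Num.max 0 (2 - dC z z0 / rho) = 0.
  apply/max_idPl; rewrite subr_le0 ler_pdivlMr //.
by rewrite /Num.min ltr10.
Qed.

Lemma bump_cont rho z0 : continuous (bump rho z0).
Proof.
move=> z.
have h2 : {for z, continuous (fun z : C => (2 - dC z z0 / rho : R^o))}.
  apply: cvgB; first exact: cvg_cst.
  by apply: cvgM; [exact: dC_cont|exact: cvg_cst].
have h0 : {for z, continuous (fun _ : C => (0%R : R^o))} by move=> ?; exact: cvg_cst.
have h1' : {for z, continuous (fun _ : C => (1%R : R^o))} by move=> ?; exact: cvg_cst.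
have h1 := @continuous_max R C (fun _ => 0%R) _ z h0 h2.
have h := (@continuous_min R C (fun _ => 1%R) _ z h1' h1).
have e : bump rho z0 = ((fun _ => 1%R : R^o) \min ((fun _ => 0%R : R^o) \max
   (fun z : C => (2 - dC z z0 / rho : R^o)))).
  by apply: funext => w.
by rewrite e.
Qed.

Lemma box_closed (z0 : C) (e : R) : closed [set z | dC z z0 <= e].
Proof.
apply: (@preimage_closed _ _ (fun z => dC z z0) [set r | r <= e]).
  by move=> z _; exact: dC_cont.
exact: closed_le.
Qed.

Lemma box_compact (z0 : C) (e : R) : compact [set z | dC z z0 <= e].
Proof.
have -> : [set z | dC z z0 <= e] =
   `[z0.1 - e, z0.1 + e]%classic `*` `[z0.2 - e, z0.2 + e]%classic.
  apply/seteqP; split => z /=; rewrite /dC ?ge_max !in_itv /= -!ler_distl.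
    by move/andP.
  by move=> [-> ->].
by apply: compact_setX; exact: segment_compact.
Qed.

Lemma bump_test rho z0 : 0 < rho -> testfun R (bump rho z0).
Proof.
move=> rp; split; first exact: bump_cont.
apply: (@subclosed_compact _ _ [set z | dC z z0 <= 2 * rho]).
- exact: closed_closure.
- exact: box_compact.
have /closure_id cb := box_closed z0 (2 * rho).
rewrite [X in _ `<=` X]cb; apply: closureS => z /= h; exact: (ltW (bump_supp _ _ _ rp h)).
Qed.

End Bump.

Section Sep.
Context {R : realType}.
Local Open Scope ring_scope.
Local Notation C := (CC R).

Lemma sep_lemma (x : Xsp R) (z0 : C) :
  exists r : R, 0 < r /\ forall j, sval x j <> z0 -> r <= dC (sval x j) z0.
Proof.
case: x => x [xi xf] /=.
pose K := `|z0.1| + `|z0.2| + 2 * 1.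
have /finite_fsetP [X eX] := xf K.
have claim : forall s : seq nat, exists r : R, 0 < r /\ r <= 1 /\
    forall j, j \in s -> x j <> z0 -> r <= dC (x j) z0.
  elim => [|j s [r [r0 [r1 Hr]]]].
    by exists 1; split => //; split => // j.
  case: (eqVneq (x j) z0) => [ej|nej].
    exists r; split => //; split => // i; rewrite in_cons => /orP[/eqP -> //|].
    exact: Hr.
  exists (Num.min r (dC (x j) z0)); split.
    by rewrite lt_min r0 dC_gt0 //; apply/eqP.
  split; first by rewrite ge_min r1.
  move=> i; rewrite in_cons => /orP[/eqP -> _|iS ne]; first by rewrite ge_min lexx orbT.
  by rewrite ge_min Hr.
have [r [r0 [r1 Hr]]] := claim (finmap.enum_fset X).
exists r; split => // j nej.
have [jX|njX] := boolP (j \in finmap.enum_fset X); first exact: Hr.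
rewrite leNgt; apply/negP => lt.
have : [set j | cmod (x j) <= K] j.
  by apply: cmod_dC; apply: (le_trans (ltW lt)).
by rewrite eX /= (negbTE njX).
Qed.

Lemma locfin_Pmap (x : Xsp R) (K : R) :
  finite_set (Pmap R x `&` [set z | cmod z <= K]).
Proof.
case: x => x [xi xf] /=.
have -> : range x `&` [set z | cmod z <= K] = x @` [set j | cmod (x j) <= K].
  apply/seteqP; split => z /=.
    by move=> [[j _ <-] h]; exists j.
  by move=> [j h <-]; split => //; exists j.
exact/finite_image/xf.
Qed.

Definition fsupp (f : C -> R) (S : set C) := S `&` f @^-1` [set~ 0].

Lemma fsupp_fin (x : Xsp R) (f : C -> R) (K : R) :
  (forall z, f z != 0 -> cmod z <= K) -> finite_set (fsupp f (Pmap R x)).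
Proof.
move=> h; apply: (sub_finite_set _ (locfin_Pmap x K)).
by move=> z [Sz fz]; split => //; apply: h; apply/eqP.
Qed.

Lemma vpair_ge1 (f : C -> R) (S : set C) z :
  finite_set (fsupp f S) -> (forall w, 0 <= f w) -> S z ->
  f z <= vpair R f S.
Proof.
move=> fin f0 Sz; rewrite /vpair fsbig_supp.
have [fz0|fzn] := eqVneq (f z) 0.
  by rewrite fz0; apply: fsumr_ge0.
rewrite (fsbigD1 z) //=; last by split => //; apply/eqP.
by rewrite lerDl fsumr_ge0.
Qed.

Lemma vpair_ge2 (f : C -> R) (S : set C) z1 z2 :
  finite_set (fsupp f S) -> (forall w, 0 <= f w) -> S z1 -> S z2 -> z1 <> z2 ->
  f z1 != 0 -> f z2 != 0 ->
  f z1 + f z2 <= vpair R f S.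
Proof.
move=> fin f0 S1 S2 ne n1 n2; rewrite /vpair fsbig_supp.
rewrite (fsbigD1 z1) //=; last by split => //; apply/eqP.
rewrite (fsbigD1 z2) //=; last by split; [split => //; apply/eqP|move=> /= e; apply: ne].
  by rewrite lerD2l lerDl fsumr_ge0.
exact: finite_setD.
Qed.

Lemma vpair_0 (f : C -> R) (S : set C) :
  (forall z, S z -> f z = 0) -> vpair R f S = 0.
Proof. by move=> h; rewrite /vpair fsbig1. Qed.

Lemma vpair_le1 (f : C -> R) (S : set C) z0 :
  (forall z, S z -> f z != 0 -> z = z0) -> f z0 <= 1 ->
  vpair R f S <= 1.
Proof.
move=> h f1; rewrite /vpair fsbig_supp.
have [H|H] := pselect (fsupp f S z0).
  have -> : S `&` f @^-1` [set~ 0] = [set z0].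
    apply/seteqP; split => z /=.
      by move=> [Sz fz]; apply: h => //; apply/eqP.
    by move=> ->.
  by rewrite fsbig_set1.
have -> : S `&` f @^-1` [set~ 0] = set0.
  apply/seteqP; split => z //= [Sz fz]; apply: H.
  have e : z = z0 by apply: h => //; apply/eqP.
  by rewrite -e; split.
by rewrite fsbig_set0.
Qed.

End Sep.


Section TopoHelp.
Lemma nbhs_open_sub {T : topologicalType} {p : T} {A} :
  nbhs p A -> exists B, open B /\ B p /\ B `<=` A.
Proof. by rewrite nbhsE => -[B [oB Bp] BA]; exists B. Qed.

Lemma nbhs_of_prod {U V : topologicalType} {p : U * V} {A : set U} {B : set V} {O} :
  open A -> A p.1 -> open B -> B p.2 -> A `*` B `<=` O -> nbhs p O.
Proof.
move=> oA Ap oB Bp sub; exists (A, B) => //; split; apply: open_nbhs_nbhs; by split.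
Qed.

Lemma prod_nbhs_open {U V : topologicalType} (p : U * V) O : nbhs p O ->
  exists A B, [/\ open A, A p.1, open B, B p.2 & A `*` B `<=` O].
Proof.
move=> [[N D] /= [Nn Dn] sub].
have [A [oA [Ap AN]]] := nbhs_open_sub Nn.
have [B [oB [Bp BD]]] := nbhs_open_sub Dn.
exists A, B; split => // q [/AN ? /BD ?]; exact: sub.
Qed.

Lemma open_setXo {U V : topologicalType} (A : set U) (B : set V) :
  open A -> open B -> open (A `*` B).
Proof.
move=> oA oB; rewrite openE => p [Ap Bp]; exact: (nbhs_of_prod oA Ap oB Bp (fun q h => h)).
Qed.

Lemma ball_open {R : realType} (c : CC R) (e : R) : open [set z | (dC z c < e)%R].
Proof.
apply: (@open_comp _ _ (fun z => dC z c) [set t | (t < e)%R]).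
  by move=> z _; exact: dC_cont.
exact: open_lt.
Qed.
End TopoHelp.

Section Main.
Context {R : realType} {EG : topologicalType} {act : EG -> autN -> EG}
  (Hact : right_action EG act) (Hcov : covering_action EG act)
  {Y : topologicalType} {g : Y -> XG R EG act}
  (Hg : cts open (openXG R EG act) g).
Local Notation C := (CC R).
Local Notation Xsp := (Xsp R).
Local Notation EX := (EX R EG).
Local Notation relEX := (relEX R EG act).
Local Notation qXG := (qXG R EG act).
Local Notation XG := (XG R EG act).
Local Notation xact := (xact R).
Local Notation openEX := (openEX R EG).
Local Notation Fg := (Fg R EG act Y g).
Local Notation Eg := (Eg R EG act Y g).
Local Notation qW := (qW R EG act Y g).
Local Notation iotag := (iotag R EG act Y g).
Local Notation piW := (piW R EG act Y g).

Definition ChartSpec (U' : set Y) (sg : Y -> EX) : Prop :=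
  open U' /\ (forall y, U' y -> g y = qXG (sg y)) /\
  (forall O, openEX O -> open (U' `&` sg @^-1` O)).

Lemma chartS y0 : exists U' sg, U' y0 /\ ChartSpec U' sg.
Proof.
have [U' [sg [oU [Uy [H1 H2]]]]] := chart Hact Hcov Hg y0.
by exists U', sg.
Qed.

Lemma bump_fin (x : Xsp) (rho : R) c : (0 < rho)%R ->
  finite_set (fsupp (bump rho c) (Pmap R x)).
Proof.
move=> rp; apply: (@fsupp_fin _ x _ (`|c.1| + `|c.2| + 2 * (2 * rho))%R) => z nz.
by apply: cmod_dC; apply: ltW; apply: bump_supp.
Qed.

Lemma Eg_Fg y z : Eg (y, z) <-> Fg y z.
Proof. by rewrite (Eg_char Hact). Qed.

Section WithChart.
Context (U' : set Y) (sg : Y -> EX) (HC : ChartSpec U' sg).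
Local Notation xs y := (sval (sg y).2).

Lemma Fg_chart {y} : U' y -> Fg y = range (xs y).
Proof. by move=> Uy; rewrite /Fg (HC.2.1 y Uy) (Pbar_qXG Hact). Qed.

Lemma Eg_chart {y} z : U' y -> Eg (y, z) <-> exists n, z = xs y n.
Proof.
move=> Uy; rewrite Eg_Fg (Fg_chart Uy); split.
  by move=> [n _ <-]; exists n.
by move=> [n ->]; exists n.
Qed.

Lemma coord_cont n D : open D -> open (U' `&` [set y | D (xs y n)]).
Proof.
move=> oD; have := HC.2.2 _ (openEX_snd _ (openX_coord n _ oD)).
by congr open.
Qed.

Lemma vague_cont f (V : set R) : testfun R f -> open V ->
  open (U' `&` [set y | V (vpair R f (Pmap R (sg y).2))]).
Proof.
move=> tf oV.
have vs : vague_subbase R [set S | V (vpair R f S)] by exists f, V.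
have := HC.2.2 _ (openEX_snd _ (openX_vague _ vs)).
by congr open.
Qed.

Lemma xs_inj y : injective (xs y).
Proof. by case: (svalP (sg y).2). Qed.

Lemma sheet_open n : exists O, open O /\
  O `&` Eg = [set p | U' p.1 /\ p.2 = xs p.1 n].
Proof.
pose good := fun q : Y * R => U' q.1 /\ (0 < q.2)%R /\
   forall j, xs q.1 j <> xs q.1 n -> (q.2 <= dC (xs q.1 j) (xs q.1 n))%R.
pose A (q : Y * R) := (U' `&` [set y | (dC (xs y n) (xs q.1 n) < q.2 / 4)%R]) `&`
   (U' `&` [set y | [set t | (t < 2)%R] (vpair R (bump (q.2 / 2) (xs q.1 n)) (Pmap R (sg y).2))]).
pose B (q : Y * R) := [set z | (dC z (xs q.1 n) < q.2 / 4)%R].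
exists (\bigcup_(q in good) (A q `*` B q)); split.
  apply: bigcup_open => q [Uq [q0 _]]; apply: open_setXo; last exact: ball_open.
  apply: openI; first exact: coord_cont (ball_open _ _).
  apply: vague_cont; last exact: open_lt.
  by apply: bump_test; rewrite divr_gt0.
apply/seteqP; split.
  move=> [y z] [[q [Uq [q0 Hq]] [[[Uy dy] [_ vy]] Bz]] Egyz] /=.
  split => //.
  have [m ez] := (Eg_chart z Uy).1 Egyz.
  have [emn|nmn] := eqVneq m n; first by rewrite ez emn.
  exfalso; move: vy; apply/negP; rewrite /= -leNgt.
  set c := xs q.1 n; set f := bump (q.2 / 2) c.
  have f1 : forall w, (dC w c < q.2 / 4)%R -> f w = 1%R.
    move=> w hw; apply: bump1; first by rewrite divr_gt0.
    by apply: ltW; apply: (lt_le_trans hw); lra.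
  have <- : (f z + f (xs y n) = 2)%R by rewrite !f1 //; lra.
  apply: vpair_ge2.
  - by apply: bump_fin; rewrite divr_gt0.
  - by move=> w; apply: bump_ge0.
  - by exists m.
  - by exists n.
  - by rewrite ez => /xs_inj e; move: nmn; rewrite e eqxx.
  - by rewrite f1 // oner_eq0.
  - by rewrite f1 // oner_eq0.
move=> [y z] /= [Uy ez]; split; last by apply/(Eg_chart z Uy); exists n.
have [r [r0 Hr]] := sep_lemma (sg y).2 (xs y n).
exists (y, r); first by split => //; split.
rewrite /A /B; subst z; split; last by rewrite /= dC_refl; lra.
split; first by split => //; rewrite /= dC_refl; lra.
split => //=.
have hv : (vpair R (bump (r / 2) (xs y n)) (Pmap R (sg y).2) <= 1)%R.
  apply: vpair_le1; last exact: bump_le1.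
  move=> w [j _ <-] nz; case: (eqVneq (xs y j) (xs y n)) => [->//|ne].
  have r2 : (0 < r / 2)%R by rewrite divr_gt0.
  have h1 := bump_supp _ _ _ r2 nz.
  have h2 : xs y j <> xs y n by apply/eqP.
  have h3 := Hr j h2; exfalso; lra.
by apply: (le_lt_trans hv); lra.
Qed.


End WithChart.
End Main.


Section Main2.
Context {R : realType} {EG : topologicalType} {act : EG -> autN -> EG}
  (Hact : right_action EG act) (Hcov : covering_action EG act)
  {Y : topologicalType} {g : Y -> XG R EG act}
  (Hg : cts open (openXG R EG act) g).
Local Notation C := (CC R).
Local Notation Xsp := (Xsp R).
Local Notation EX := (EX R EG).
Local Notation relEX := (relEX R EG act).
Local Notation qXG := (qXG R EG act).
Local Notation XG := (XG R EG act).
Local Notation openEX := (openEX R EG).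
Local Notation Fg := (Fg R EG act Y g).
Local Notation Eg := (Eg R EG act Y g).
Local Notation qW := (qW R EG act Y g).
Local Notation iotag := (iotag R EG act Y g).
Local Notation piW := (piW R EG act Y g).
Local Notation Wg := (Wg R EG act Y g).
Local Notation Pg := (Pg R EG act Y g).
Local Notation openW := (openW R EG act Y g).
Local Notation openPg := (openPg R EG act Y g).
Local Notation openPgN := (openPgN R EG act Y g).

Section WithChart2.
Context (U' : set Y) (sg : Y -> EX) (HC : ChartSpec (g := g) U' sg).
Local Notation xs y := (sval (sg y).2).

Lemma W_chart w : U' (piW w) -> exists m (h : g (piW w) = qXG (sg (piW w))),
  w = qW (exist _ (piW w, sg (piW w)) h, m).
Proof.
move=> Uy; have h := HC.2.1 _ Uy.
have : relEX (sval (reprW R EG act Y g w).1).2 (sg (piW w)).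
  by apply/(qXG_eq Hact); rewrite -h -Pg_prop.
move=> [s [e1 e2]]; exists (aut_fun s (reprW R EG act Y g w).2), h.
rewrite -{1}(reprWK w); apply/(qW_eq Hact); exists s; split => //.
Qed.

Lemma Bn_open (U : set Wg) : openW U -> forall n,
  open (U' `&` [set y | exists h : g y = qXG (sg y),
                         U (qW (exist _ (y, sg y) h, n))]).
Proof.
move=> oU n.
have [[y0 U0]|none] := pselect (exists y0, U' y0); last first.
  rewrite (_ : _ `&` _ = set0); first exact: open0.
  by apply/seteqP; split => // y [Uy _]; apply: none; exists y.
pose p0 : Pg := exist _ (y0, sg y0) (HC.2.1 y0 U0).
pose pi y : Pg := match pselect (g y = qXG (sg y)) with
                  | left h => exist _ (y, sg y) h | right _ => p0 end.
have key : forall y, U' y -> sval (pi y) = (y, sg y).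
  move=> y Uy; rewrite /pi; case: pselect => // nh.
  by exfalso; apply: nh; apply: HC.2.1.
have keyh : forall y (h : g y = qXG (sg y)), pi y = exist _ (y, sg y) h.
  move=> y h; rewrite /pi; case: pselect => // h'; exact: eq_exist.
rewrite (_ : _ `&` _ = U' `&` (fun y => (pi y, n)) @^-1` (qW @^-1` U)).
  apply: (open_pre_gen _ _ _ HC.1); last exact: oU.
  move=> b [[O [oO ->]]|[m ->]].
    rewrite /preimage /=.
    apply: (@open_pre_gen _ _ _ U' pi HC.1); last exact: oO.
    move=> b' [[A [oA ->]]|[O' [oO' ->]]].
      rewrite (_ : _ `&` _ = U' `&` A); first by apply: openI; [exact: HC.1|exact: oA].
      apply/seteqP; split => y [Uy hy]; split => //; move: hy; rewrite /preimage /= key //.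
    rewrite (_ : _ `&` _ = U' `&` sg @^-1` O'); first exact: HC.2.2.
    apply/seteqP; split => y [Uy hy]; split => //; move: hy; rewrite /preimage /= key //.
  have [->|nm] := eqVneq n m.
    by rewrite (_ : _ `&` _ = U'); [exact: HC.1|apply/seteqP; split => y //= [] //].
  rewrite (_ : _ `&` _ = set0); first exact: open0.
  by apply/seteqP; split => // y [_ /= e]; move: nm; rewrite e eqxx.
apply/seteqP; split => y [Uy hy]; split => //.
  by move: hy => [h Uh]; rewrite /preimage /= (keyh y h).
have h := HC.2.1 y Uy; exists h; move: hy; by rewrite /preimage /= (keyh y h).
Qed.

End WithChart2.

Lemma iotag_open (U : set Wg) : openW U ->
  exists V, open V /\ iotag @` U = V `&` range iotag.
Proof.
move=> oU.
exists (\bigcup_(V' in [set V' | open V' /\ V' `&` Eg `<=` iotag @` U]) V').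
split; first by apply: bigcup_open => V' [].
apply/seteqP; split; last first.
  by move=> p [[V' [_ sV] Vp] Ep]; apply: sV.
move=> p [w Uw <-]; split; last by exists w.
have [U' [sg [Uy HC]]] := chartS Hact Hcov Hg (piW w).
have [m [h ew]] := W_chart _ _ HC _ Uy.
have [O [oO eO]] := sheet_open Hact _ _ HC m.
pose Bn := U' `&` [set y | exists h : g y = qXG (sg y),
                         U (qW (exist _ (y, sg y) h, m))].
exists (O `&` (Bn `*` setT)).
  split.
    apply: openI => //; apply: open_setXo; [exact: (Bn_open _ _ HC _ oU)|exact: openT].
  move=> q [[Oq [Bq _]] Eq].
  have : (O `&` Eg) q by [].
  rewrite eO => -[Uq eq].
  case: Bq => Uq' [h' Uh']; exists (qW (exist _ (q.1, sg q.1) h', m)) => //.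
  by rewrite (iotag_qW Hact) /= -eq; case: (q).
have ip : iotag w = (piW w, sval (sg (piW w)).2 m).
  by rewrite {1}ew (iotag_qW Hact).
split.
  have : [set p | U' p.1 /\ p.2 = sval (sg p.1).2 m] (iotag w) by rewrite ip.
  by rewrite -eO => -[].
split; last by [].
rewrite ip; split => //; exists h; by rewrite -ew.
Qed.

Lemma iotag_cts : cts openW open iotag.
Proof.
move=> V oV; rewrite /openW /=; apply: gen_open_local => a /= Va.
rewrite /preimage /= (iotag_qW Hact) in Va.
have [A [B [oA Aa oB Bb sub]]] := prod_nbhs_open _ _ (open_nbhs_nbhs (conj oV Va)).
exists ([set a' : PgN R EG act Y g | [set p : Pg | A (sval p).1] a'.1] `&`
        [set a' | [set p : Pg | [set q : EX | [set x | B (sval x a.2)] q.2] (sval p).2] a'.1]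
        `&` [set a' | a'.2 = a.2]).
split.
  apply: gen_openI; last exact: openPgN_snd.
  apply: gen_openI; apply: openPgN_fst.
    exact: openPg_fst.
  apply: openPg_snd; apply: openEX_snd; exact: openX_coord.
split; first by split.
move=> a' [[Aa' Ba'] ea']; rewrite /preimage /= (iotag_qW Hact); apply: sub; split => //=.
by rewrite ea'.
Qed.

Lemma Eg_closed : closed Eg.
Proof.
rewrite -openC openE => -[y0 z0] /= nE.
have nF : ~ Fg y0 z0 by move/(Eg_Fg Hact).
pose x0 := (reprXG R EG act (g y0)).2.
have nx : forall j, sval x0 j <> z0 by move=> j ej; apply: nF; exists j.
have [r [r0 Hr]] := sep_lemma x0 z0.
have r2 : (0 < r / 2)%R by rewrite divr_gt0.
pose f := bump (r / 2) z0.
have vs : vague_subbase R [set S | [set t | (t < 1)%R] (vpair R f S)].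
  exists f, [set t | (t < 1)%R]; split; first exact: bump_test.
  by split; [exact: open_lt|].
apply: (@nbhs_of_prod _ _ _ (g @^-1` [set a | [set S | [set t | (t < 1)%R] (vpair R f S)] (Pbar R EG act a)]) [set z | (dC z z0 < r / 2)%R]).
- by apply: Hg; apply: (openXG_Pbar Hact).
- rewrite /preimage /= (_ : vpair R f _ = 0%R) //.
  apply: vpair_0 => z [j _ <-].
  have [//|nz] := eqVneq (f (sval x0 j)) 0%R.
  have h1 := bump_supp _ _ _ r2 nz; have h2 := Hr j (nx j); exfalso; lra.
- exact: ball_open.
- by rewrite /= dC_refl.
- move=> [y z] [/= Ny Bz] /(Eg_Fg Hact) Fz.
  move: Ny; rewrite /preimage /=; apply/negP; rewrite -leNgt.
  have f1 : f z = 1%R by apply: bump1 => //; exact: ltW.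
  rewrite -f1; apply: vpair_ge1 => //.
    exact: bump_fin.
  by move=> w; exact: bump_ge0.
Qed.

Lemma covering : covering_on Eg fst.
Proof.
split.
  by apply: continuous_subspaceT => p; exact: cvg_fst.
move=> b; have [U' [sg [Ub HC]]] := chartS Hact Hcov Hg b.
exists U'; split; first exact: HC.1.
split => //.
exists nat, (fun n => [set p : Y * C | U' p.1 /\ p.2 = sval (sg p.1).2 n]).
split.
  move=> i; have [O [oO eO]] := sheet_open Hact _ _ HC i; exists O.
  by split; [exact: oO|rewrite eO].
split.
  move=> i j ne; apply/seteqP; split => // p [[_ e1] [_ e2]]; apply: ne.
  by apply: (xs_inj sg p.1); rewrite -e1 -e2.
split.
  apply/seteqP; split.
    move=> [y z] [Eyz /= Uy]; have [m ez] := (Eg_chart Hact _ _ HC z Uy).1 Eyz.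
    by exists m.
  move=> [y z] [m _ /= [Uy ez]]; split => //.
  by apply/(Eg_chart Hact _ _ HC z Uy); exists m.
move=> i; split.
  move=> [y1 z1] [y2 z2]; rewrite !inE /= => -[Uy1 e1] [Uy2 e2] ey.
  by subst y2; rewrite e1 e2.
split.
  apply/seteqP; split => y.
    by move=> [p [Up _] <-].
  by move=> Uy; exists (y, sval (sg y).2 i).
move=> O oO; rewrite openE => y [[y' z'] [Op [Up /= ep]] /= ey]; subst y' z'.
have [A [B [oA Aa oB Bb sub]]] := prod_nbhs_open _ _ (open_nbhs_nbhs (conj oO Op)).
have oN : open (A `&` (U' `&` [set y' | B (sval (sg y').2 i)])).
  by apply: openI => //; apply: (coord_cont _ _ HC).
apply: (filterS _ (open_nbhs_nbhs (conj oN _))); last by split.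
move=> y' [Ay' [Uy' By']]; exists (y', sval (sg y').2 i) => //.
split; [exact: sub|by split].
Qed.

End Main2.

Theorem mainTheorem14 (R : realType) (EG : topologicalType)
    (act : EG -> autN -> EG)
    (Hact : right_action EG act) (Hcov : covering_action EG act)
    (Hcontr : contractible R EG)
    (Y : topologicalType) (HY : hausdorff_space Y)
    (g : Y -> XG R EG act) (Hg : cts open (openXG R EG act) g) :
  embedding (openW R EG act Y g) (iotag R EG act Y g) /\
  (forall w, (iotag R EG act Y g w).1 = piW R EG act Y g w) /\
  covering_on (Eg R EG act Y g) fst /\
  Eg R EG act Y g = [set yz | Fg R EG act Y g yz.1 yz.2] /\
  closed (Eg R EG act Y g).
Proof.
split.
  split; first exact: (iotag_inj Hact).
  split; first exact: (iotag_cts Hact).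
  exact: (iotag_open Hact Hcov Hg).
split; first by [].
split; first exact: (covering Hact Hcov Hg).
split; first exact: (Eg_char Hact).
exact: (Eg_closed Hact Hg).
Qed.
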